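(* For every $\varepsilon>0$ there exists $N\in\mathbb{N}$ such that the following holds for every $N$-partitioned hypergraph $H$ and every choice of vertices $\gamma^1_{ij},\gamma^2_{ij}\in V_{ij}$, $i<j$, $i,j\in[N]$. There exist $n\in\mathbb{N}$, $k\in[n-2]$ and an $n$-partitioned subhypergraph $H_0$ of $H$ with index set $I=\{i_1,\ldots,i_n\}\subseteq[N]$, $i_1<\cdots<i_n$, such that: (a) every triad other than the $(i_k,i_{k+1},i_{k+2})$-triad is the same in $H_0$ and in $H$; (b) the degree of every top vertex of the $(i_k,i_{k+1},i_{k+2})$-triad in $H_0$ is smaller by at most $\varepsilon$ than its degree in $H$; (c) every right neighbor of $\gamma^1_{i_ki_{k+2}}$ in the $(i_k,i_{k+1},i_{k+2})$-triad of $H_0$ is also a right neighbor of $\gamma^1_{i_ji_{k+2}}$ in the $(i_j,i_{k+1},i_{k+2})$-triad for some $j<k$; (d) every left neighbor of $\gamma^2_{i_ki_{k+2}}$ in the $(i_k,i_{k+1},i_{k+2})$-triad of $H_0$ is also a left neighbor of $\gamma^2_{i_ki_j}$ in the $(i_k,i_{k+1},i_j)$-triad for some $j>k+2$.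
   Context: An $n$-partitioned hypergraph $H$ is a finite $3$-uniform hypergraph whose vertex set is partitioned into nonempty sets $V_{ij}$, $1\le i<j\le n$, such that every edge has, for some $1\le i<j<k\le n$, exactly one vertex in each of $V_{ij}$, $V_{ik}$, $V_{jk}$; the set of such edges is the $(i,j,k)$-triad, and the vertices of $V_{ik}$ are its top vertices. The degree of $v\in V_{ik}$ in the $(i,j,k)$-triad is the number of edges of the triad containing $v$ divided by $|V_{ij}||V_{jk}|$. For $v\in V_{ik}$, a left neighbor (right neighbor) of $v$ in the $(i,j,k)$-triad is a vertex of $V_{ij}$ (of $V_{jk}$) contained together with $v$ in an edge of that triad. For $I\subseteq[n]$, the induced subhypergraph with index set $I$ has parts $V_{ij}$, $i<j$, $i,j\in I$ (indexed by elements of $I$) and all edges of $H$ inside these parts; a subhypergraph is obtained from an induced subhypergraph by deleting some edges, and has the same index set. *)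

(* Defs.v *)
From HB Require Import structures.
From mathcomp Require Import all_boot all_order all_algebra.
From mathcomp Require Import reals.
Set Implicit Arguments. Unset Strict Implicit. Unset Printing Implicit Defensive.
Import Order.TTheory GRing.Theory Num.Theory.

(* Indices are 0-based: the index set [N] is {0,...,N-1}.
   A vertex v lies in the part V_{ij} with (i,j) = part v. *)
Section Hyp.
Variable T : finType.
Variable part : T -> nat * nat.

Definition Vpart (i j : nat) : {set T} := [set v | part v == (i, j)].

Definition triadb (e : {set T}) (i j k : nat) : bool :=
  [&& i < j, j < k, #|e| == 3,
      #|e :&: Vpart i j| == 1, #|e :&: Vpart i k| == 1 &
      #|e :&: Vpart j k| == 1].

Definition partitioned_hypergraph (N : nat) (E : {set {set T}}) : Prop :=
  [/\ forall v, (part v).1 < (part v).2 < N,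
      forall i j, i < j < N -> exists v, part v = (i, j) &
      forall e, e \in E -> exists i j k, k < N /\ triadb e i j k].

Definition subhypergraph (s : seq nat) (E E0 : {set {set T}}) : Prop :=
  E0 \subset E /\
  forall e, e \in E0 ->
    exists a b c, [/\ a \in s, b \in s, c \in s & triadb e a b c].

Definition deg (R : realType) (E : {set {set T}}) (v : T) (i j k : nat) : R :=
  (#|[set e in E | (v \in e) && triadb e i j k]|)%:R /
  (#|Vpart i j| * #|Vpart j k|)%:R.

Definition right_nb (E : {set {set T}}) (v w : T) (i j k : nat) : bool :=
  [exists e in E, [&& triadb e i j k, v \in e, w \in e & w \in Vpart j k]].
Definition left_nb (E : {set {set T}}) (v w : T) (i j k : nat) : bool :=
  [exists e in E, [&& triadb e i j k, v \in e, w \in e & w \in Vpart i j]].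
End Hyp.
Arguments deg {T} part {R} E v i j k.

(* Main.v *)
Require Import Defs.
From HB Require Import structures.
From mathcomp Require Import all_boot all_order all_algebra.
From mathcomp Require Import reals.
From mathcomp Require Import zify ring lra.
Import Order.TTheory GRing.Theory Num.Theory.
Set Implicit Arguments. Unset Strict Implicit.

Definition sq p m r := iota 0 p.+1 ++ m :: iota (2 * m - r) r.+1.

Lemma sq_mem p m r a : r < m -> (a \in sq p m r) = [|| (a <= p), a == m | (2 * m - r <= a <= 2 * m)].
Proof. move=> rm; rewrite mem_cat mem_iota in_cons mem_iota; apply/idP/idP; lia. Qed.

Lemma sq_sorted p m r : p < m -> r < m -> sorted ltn (sq p m r).
Proof.
move=> pm rm; rewrite sorted_pairwise; last exact: ltn_trans.
rewrite pairwise_cat pairwise_cons -!sorted_pairwise ?iota_ltn_sorted ?andbT;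
  try exact: ltn_trans.
apply/andP; split.
  by apply/allrelP => a b; rewrite mem_iota in_cons mem_iota; lia.
by apply/allP => b; rewrite mem_iota; lia.
Qed.

Lemma sq_all p m r : p < m -> r < m -> all (fun i => i < 2 * m + 1) (sq p m r).
Proof. by move=> pm rm; apply/allP => a; rewrite sq_mem //= ; lia. Qed.

Lemma sq_size p m r : size (sq p m r) = p + r + 3.
Proof. rewrite /sq size_cat /= !size_iota; lia. Qed.

Lemma sq_lo p m r j : j <= p -> nth 0 (sq p m r) j = j.
Proof. by move=> jp; rewrite nth_cat size_iota ltnS jp nth_iota. Qed.

Lemma sq_m p m r : nth 0 (sq p m r) p.+1 = m.
Proof. by rewrite nth_cat size_iota ltnn subnn. Qed.

Lemma sq_hi p m r i : i <= r -> nth 0 (sq p m r) (p.+2 + i) = 2 * m - r + i.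
Proof.
move=> ir; rewrite nth_cat size_iota.
have -> : (p.+2 + i < p.+1) = false by lia.
have -> : p.+2 + i - p.+1 = i.+1 by lia.
have -> : nth 0 (m :: iota (2 * m - r) r.+1) i.+1 = nth 0 (iota (2 * m - r) r.+1) i by [].
by rewrite nth_iota.
Qed.

Lemma sq_y p m r : nth 0 (sq p m r) p.+2 = 2 * m - r.
Proof. by rewrite -[p.+2]addn0 sq_hi ?addn0. Qed.

Lemma ar1 m r j : j < r -> r < m -> 2 * m - r + (r - j) = 2 * m - j.
Proof. lia. Qed.
Lemma ar2 m r j : j < r -> r < m -> (2 * m - j == 2 * m - r) = false.
Proof. move=> *; apply/eqP; lia. Qed.
Lemma ar4 p r j : j < r -> p.+2 < p.+2 + (r - j) < p + r + 3.
Proof. lia. Qed.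
Lemma ar5 p r : p + 2 < p + r + 3.
Proof. lia. Qed.


Section Aux.
Variable T : finType.
Variable part : T -> nat * nat.

Lemma inVpart i j v : (v \in Vpart part i j) = (part v == (i, j)).
Proof. by rewrite inE. Qed.

Lemma card1_eq (A : {set T}) x y : #|A| == 1 -> x \in A -> y \in A -> x = y.
Proof. by case/cards1P=> z ->; rewrite !inE => /eqP -> /eqP ->. Qed.

Lemma pick1 (A : {set T}) x : #|A| == 1 -> x \in A -> [pick z in A] = Some x.
Proof.
move=> h xA; case: pickP => [z zA|/(_ x)]; last by rewrite xA.
by rewrite (card1_eq h zA xA).
Qed.

Lemma triad_eq e a b c l v r : triadb part e a b c ->
  l \in e -> part l = (a,b) -> v \in e -> part v = (a,c) ->
  r \in e -> part r = (b,c) -> e = [set l; v; r].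
Proof.
case/and5P=> ab bc /eqP e3 _ _ le pl ve pv re pr.
apply/esym/eqP; rewrite eqEcard; apply/andP; split.
  by apply/subsetP=> x; rewrite !inE => /orP[/orP[]|] /eqP ->.
have lv : l != v by apply/eqP=> E; move: pl; rewrite E pv => -[]; lia.
have lr : l != r by apply/eqP=> E; move: pl; rewrite E pr => -[]; lia.
have vr : v != r by apply/eqP=> E; move: pv; rewrite E pr => -[]; lia.
rewrite e3 -setUA cardsU1 cards2 vr !inE negb_or lv lr.
by [].
Qed.

Lemma triad_ex e a b c : triadb part e a b c ->
  exists l v r, [/\ l \in e, v \in e & r \in e] /\
                    [/\ part l = (a,b), part v = (a,c) & part r = (b,c)].
Proof.
case/and5P=> _ _ _ h1 /andP[h2 h3].
have get i j : #|e :&: Vpart part i j| == 1 -> exists2 x, x \in e & part x = (i,j).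
  by case/cards1P=> x hx; move: (set11 x); rewrite -hx !inE => /andP[xe /eqP px]; exists x.
case: (get _ _ h1) => l ??; case: (get _ _ h2) => v ??; case: (get _ _ h3) => r ??.
by exists l, v, r.
Qed.

Lemma triad_part e a b c u : triadb part e a b c -> u \in e ->
  part u = (a,b) \/ part u = (a,c) \/ part u = (b,c).
Proof.
move=> h ue; case: (triad_ex h) => l [v [r [[le ve re] [pl pv pr]]]].
move: ue; rewrite (triad_eq h le pl ve pv re pr) !inE => /orP[/orP[]|] /eqP ->; tauto.
Qed.

Lemma triad_uniq e a b c a' b' c' : triadb part e a b c -> triadb part e a' b' c' ->
  (a, b, c) = (a', b', c').
Proof.
move=> h h'; have /and3P[ab bc _] := h; have /and3P[ab' bc' _] := h'.
case: (triad_ex h') => l [v [r [[le ve re] [pl pv pr]]]].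
have := triad_part h le; have := triad_part h ve; have := triad_part h re.
rewrite pl pv pr => H1 H2 H3.
suff : a = a' /\ b = b' /\ c = c' by case=> -> [-> ->].
repeat match goal with H : _ \/ _ |- _ => destruct H end;
repeat match goal with H : (_,_) = (_,_) |- _ => injection H; clear H; intros end; lia.
Qed.

Lemma triad_f e a b c v : triadb part e a b c -> v \in e -> part v = (a,c) ->
  [/\ e = [set odflt v [pick z in e :&: Vpart part a b]; v;
               odflt v [pick z in e :&: Vpart part b c]],
      odflt v [pick z in e :&: Vpart part a b] \in e :&: Vpart part a b &
      odflt v [pick z in e :&: Vpart part b c] \in e :&: Vpart part b c].
Proof.
move=> h ve pv; have /and5P[_ _ _ h1 /andP[h2 h3]] := h.
case: (triad_ex h) => l [v' [r [[le ve' re] [pl pv' pr]]]].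
have lI : l \in e :&: Vpart part a b by rewrite !inE le pl eqxx.
have rI : r \in e :&: Vpart part b c by rewrite !inE re pr eqxx.
have vv : v' = v.
  by apply: (card1_eq h2); rewrite !inE ?ve ?ve' ?pv ?pv' eqxx.
rewrite (pick1 h1 lI) (pick1 h3 rI) /=; split => //.
by rewrite -vv; apply: (triad_eq h).
Qed.
End Aux.


Definition U (T : finType) (F : nat -> {set T}) n : {set T} :=
  [set w | [exists j : 'I_n, w \in F j]].

Lemma U_S (T : finType) (F : nat -> {set T}) n : U F n.+1 = U F n :|: F n.
Proof.
apply/setP=> w; rewrite !inE; apply/existsP/orP.
  case=> j; case: (ltnP j n) => jn wj.
    by left; apply/existsP; exists (Ordinal jn).
  by right; have -> : n = j by have := ltn_ord j; lia.
case=> [/existsP[j wj]|wn]; first by exists (widen_ord (leqnSn n) j).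
by exists ord_max.
Qed.

Lemma union_sum (T : finType) (F : nat -> {set T}) n :
  (\sum_(i < n) #|F i :\: U F i| = #|U F n|)%N.
Proof.
elim: n => [|n IH].
  rewrite big_ord0; apply/esym/eqP; rewrite cards_eq0; apply/eqP/setP=> w.
  by rewrite !inE; apply/existsP; case=> -[].
rewrite big_ord_recr /= IH U_S cardsU cardsD setIC.
have := subset_leq_card (subsetIl (F n) (U F n)).
rewrite setIC; lia.
Qed.

Local Open Scope ring_scope.
Lemma count_bad (R : realType) (c : R) (t : nat) (I : finType) (d : I -> nat) (V : nat) :
  0 < c -> 1 <= c * t%:R -> (\sum_i d i <= V)%N ->
  (#|[set i : I | (c * V%:R < (d i)%:R)%R]| <= t)%N.
Proof.
move=> c0 ct sV; set B := [set i | _]; rewrite leqNgt; apply/negP=> tB.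
have : (0 < #|B|)%N by lia.
rewrite card_gt0 => /set0Pn[i0]; rewrite inE => hi0.
have di0 : (d i0 <= V)%N.
  by apply: leq_trans sV; rewrite (bigD1 i0) //= leq_addr.
have sB : (\sum_(i in B) d i <= V)%N.
  by apply: leq_trans sV; rewrite [X in (_ <= X)%N](bigID (mem B)) /= leq_addr.
have : #|B|%:R * (c * V%:R) <= V%:R :> R.
  apply: le_trans (_ : (\sum_(i in B) d i)%:R <= _); last by rewrite ler_nat.
  rewrite natr_sum -sum1_card natr_sum mulr_suml.
  by apply: ler_sum => i; rewrite inE mul1r => /ltW.
have Vp : 0 < V%:R :> R.
  have : (d i0)%:R <= V%:R :> R by rewrite ler_nat.
  have : 0 <= c * V%:R by rewrite mulr_ge0 // ltW.
  lra.
have tB' : t.+1%:R <= #|B|%:R :> R by rewrite ler_nat.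
move=> h.
have h2 : #|B|%:R * c <= 1 :> R.
  by rewrite -(ler_pM2r Vp) mul1r -mulrA.
have : t.+1%:R * c <= #|B|%:R * c :> R by rewrite ler_pM2r.
rewrite -addn1 natrD; nra.
Qed.

Unset Implicit Arguments. Set Strict Implicit.
Local Open Scope ring_scope.

Lemma sum_card (I : finType) (P : pred I) : (\sum_i (P i : nat) = #|[set i | P i]|)%N.
Proof. by rewrite -sum1_card [RHS]big_mkcond /=; apply: eq_bigr => i _; rewrite inE; case: (P i). Qed.
Lemma sum_const_ord m k : (\sum_(i < m) k = m * k)%N.
Proof. by rewrite sum_nat_const card_ord. Qed.

Lemma main_pick (R : realType) (c : R) (t m : nat) (VR VL : nat -> nat)
   (DR DL : nat -> nat -> nat) :
  0 < c -> 1 <= c * t%:R -> m = (2 * t + 1)%N ->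
  (forall r, (\sum_(p < m) DR p r <= VR r)%N) ->
  (forall p, (\sum_(r < m) DL p r <= VL p)%N) ->
  exists p r : 'I_m, ((DR p r)%:R <= c * (VR r)%:R) && ((DL p r)%:R <= c * (VL p)%:R).
Proof.
move=> c0 ct mE hR hL.
case: (boolP [exists pr : 'I_m * 'I_m, ((DR pr.1 pr.2)%:R <= c * (VR pr.2)%:R) &&
   ((DL pr.1 pr.2)%:R <= c * (VL pr.1)%:R)]).
  by case/existsP=> -[p r] h; exists p, r.
rewrite negb_exists => /forallP H; exfalso.
pose bR (p r : 'I_m) := c * (VR r)%:R < (DR p r)%:R.
pose bL (p r : 'I_m) := c * (VL p)%:R < (DL p r)%:R.
have cR r : (#|[set p | bR p r]| <= t)%N.
  by apply: (count_bad (d := fun p : 'I_m => DR p r)).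
have cL p : (#|[set r | bL p r]| <= t)%N.
  by apply: (count_bad (d := fun r : 'I_m => DL p r)).
have : (m * m <= \sum_(p < m) \sum_(r < m) (bR p r + bL p r))%N.
  rewrite -sum_const_ord; apply: leq_sum => p _.
  have h1 : (\sum_(r<m) 1 = m)%N by rewrite sum_const_ord muln1.
  rewrite -[X in (X <= _)%N]h1; apply: leq_sum => r _; have := H (p, r); rewrite /= negb_and /bR /bL -!ltNge.
  by case/orP=> ->; rewrite ?addn1 ?add1n.
under eq_bigr => p _ do rewrite big_split.
rewrite big_split /=.
have e1 : (\sum_(r < m) \sum_(p < m) bR p r <= m * t)%N.
  rewrite -sum_const_ord; apply: leq_sum => r _; rewrite sum_card; exact: cR.
have e2 : (\sum_(p < m) \sum_(r < m) bL p r <= m * t)%N.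
  rewrite -sum_const_ord; apply: leq_sum => p _; rewrite sum_card; exact: cL.
rewrite [X in (_ <= X + _)%N]exchange_big /= => h.
have h2 := leq_trans h (leq_add e1 e2); clear -h2 mE; subst m; nia.
Qed.

Theorem lemma5p8 (R : realType) (eps : R) :
  0 < eps ->
  exists N : nat,
  forall (T : finType) (part : T -> nat * nat) (E : {set {set T}})
         (g1 g2 : nat -> nat -> T),
  partitioned_hypergraph part N E ->
  (forall i j, (i < j < N)%N ->
     g1 i j \in Vpart part i j /\ g2 i j \in Vpart part i j) ->
  exists (s : seq nat) (k : nat) (E0 : {set {set T}}),
  [/\ sorted ltn s, all (fun i => (i < N)%N) s, (k + 2 < size s)%N &
      subhypergraph part s E E0] /\
  [/\
      (forall a b c, a \in s -> b \in s -> c \in s ->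
         (a, b, c) != (nth 0%N s k, nth 0%N s k.+1, nth 0%N s k.+2) ->
         forall e, (e \in E0) && triadb part e a b c =
                   (e \in E) && triadb part e a b c),
      (* (b) *)
      (forall v, v \in Vpart part (nth 0%N s k) (nth 0%N s k.+2) ->
         deg part E v (nth 0%N s k) (nth 0%N s k.+1) (nth 0%N s k.+2)
         - deg part E0 v (nth 0%N s k) (nth 0%N s k.+1) (nth 0%N s k.+2)
         <= eps),
      (* (c) *)
      (forall w, right_nb part E0 (g1 (nth 0%N s k) (nth 0%N s k.+2)) w
                   (nth 0%N s k) (nth 0%N s k.+1) (nth 0%N s k.+2) ->
         exists2 j, (j < k)%N &
           right_nb part E0 (g1 (nth 0%N s j) (nth 0%N s k.+2)) w
                   (nth 0%N s j) (nth 0%N s k.+1) (nth 0%N s k.+2)) &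
      (* (d) *)
      (forall w, left_nb part E0 (g2 (nth 0%N s k) (nth 0%N s k.+2)) w
                   (nth 0%N s k) (nth 0%N s k.+1) (nth 0%N s k.+2) ->
         exists2 j, (k.+2 < j < size s)%N &
           left_nb part E0 (g2 (nth 0%N s k) (nth 0%N s j)) w
                   (nth 0%N s k) (nth 0%N s k.+1) (nth 0%N s j))].
Proof.
move=> eps0.
pose c := eps / 2.
have c0 : 0 < c by rewrite /c divr_gt0.
pose t := Num.Def.archi_bound (2 / eps).
have ht : 2 / eps < t%:R by apply: archi_boundP; rewrite divr_ge0 // ltW.
have ct : 1 <= c * t%:R.
  have e1 : c * (2 / eps) = 1 by rewrite /c; field; rewrite gt_eqF.
  by rewrite -[X in X <= _]e1 ler_pM2l // ltW.
clearbody t.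
pose m := (2 * t + 1)%N.
exists (2 * m + 1)%N.
move=> T part E g1 g2 _ _.
pose y (r : nat) := (2 * m - r)%N.
pose Rs r := fun j => [set w | right_nb part E (g1 j (y r)) w j m (y r)].
pose Ls p := fun i => [set w | left_nb part E (g2 p (y i)) w p m (y i)].
pose DR p r := (Rs r p :\: U (Rs r) p).
pose DL p r := (Ls p r :\: U (Ls p) r).
pose VR r := #|Vpart part m (y r)|.
pose VL p := #|Vpart part p m|.
have hR r : (\sum_(p < m) #|DR p r| <= VR r)%N.
  rewrite (union_sum (Rs r) m); apply: subset_leq_card; apply/subsetP => w.
  rewrite inE => /existsP[j]; rewrite inE => /existsP[e /andP[_ /and4P[_ _ _ ->]]].
  by [].
have hL p : (\sum_(r < m) #|DL p r| <= VL p)%N.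
  rewrite (union_sum (Ls p) m); apply: subset_leq_card; apply/subsetP => w.
  rewrite inE => /existsP[j]; rewrite inE => /existsP[e /andP[_ /and4P[_ _ _ ->]]].
  by [].
have [p [r /andP[gR gL]]] := @main_pick R c t m VR VL
   (fun p r => #|DR p r|) (fun p r => #|DL p r|) c0 ct erefl hR hL.
have pm : (p < m)%N := ltn_ord p.
have rm : (r < m)%N := ltn_ord r.
pose s := sq p m r.
have mem_s a : (a \in s) = [|| (a <= p)%N, a == m | (y r <= a <= 2 * m)%N] by exact: sq_mem.
have nth_lo j : (j <= p)%N -> nth 0%N s j = j by exact: sq_lo.
have nth_m : nth 0%N s p.+1 = m by exact: sq_m.
have nth_hi i : (i <= r)%N -> nth 0%N s (p.+2 + i) = (y r + i)%N by exact: sq_hi.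
have nth_y : nth 0%N s p.+2 = y r by exact: sq_y.
pose inS (e : {set T}) := has (fun a => has (fun b => has (fun cc => triadb part e a b cc) s) s) s.
pose ok1 (e : {set T}) := (g1 p (y r) \in e) ==>
   [forall w in e, (w \in Vpart part m (y r)) ==> (w \in U (Rs r) p)].
pose ok2 (e : {set T}) := (g2 p (y r) \in e) ==>
   [forall w in e, (w \in Vpart part p m) ==> (w \in U (Ls p) r)].
pose E0 := [set e in E | inS e && (triadb part e p m (y r) ==> (ok1 e && ok2 e))].
have hasT e a b cc : a \in s -> b \in s -> cc \in s -> triadb part e a b cc -> inS e.
  move=> aS bS cS te; apply/hasP; exists a => //; apply/hasP; exists b => //.
  by apply/hasP; exists cc.
have nonspec e a b cc : a \in s -> b \in s -> cc \in s -> (a, b, cc) != (nth 0%N s p, m, y r) ->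
   e \in E -> triadb part e a b cc -> e \in E0.
  move=> aS bS cS neq eE te; rewrite inE eE (hasT e a b cc) //=.
  apply/implyP => te'; move: neq; rewrite nth_lo // (triad_uniq te te') eqxx.
  by [].
have E0E : E0 \subset E by apply/subsetP => e; rewrite inE => /andP[].
have pS : (p : nat) \in s by rewrite mem_s leqnn.
have mS : m \in s by rewrite mem_s eqxx orbT.
have yS : y r \in s by rewrite mem_s leqnn /y leq_subr /= !orbT.
exists s, p, E0; split.
  split.
  - exact: sq_sorted.
  - exact: sq_all.
  - by rewrite sq_size ar5.
  - split => // e; rewrite inE => /andP[_ /andP[/hasP[a aS /hasP[b bS /hasP[cc cS te]]] _]].
    by exists a, b, cc.
rewrite nth_lo // nth_m nth_y.
split.
- move=> a b cc aS bS cS neq e.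
  case te: (triadb part e a b cc); rewrite ?andbF //= !andbT.
  apply/idP/idP => [|eE]; first by move/(subsetP E0E).
  by apply: (nonspec e a b cc) => //; rewrite nth_lo.
- move=> v vV; rewrite /deg.
  have pv : part v = (nat_of_ord p, y r) by move: vV; rewrite inE => /eqP.
  set S := [set e in E | (v \in e) && triadb part e p m (y r)].
  set S0 := [set e in E0 | (v \in e) && triadb part e p m (y r)].
  have S0S : S0 \subset S.
    apply/subsetP => e; rewrite [e \in S0]inE => /andP[eE0 h].
    by rewrite [e \in S]inE h (subsetP E0E _ eE0).
  have cardS : #|S| = (#|S0| + #|S :\: S0|)%N.
    by rewrite -(cardsID S0 S) (setIidPr S0S).
  pose f (e : {set T}) := (odflt v [pick z in e :&: Vpart part p m],
                           odflt v [pick z in e :&: Vpart part m (y r)]).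
  have finj : {in S :\: S0 &, injective f}.
    move=> e1 e2; rewrite !inE => /andP[_ /andP[_ /andP[v1 t1]]] /andP[_ /andP[_ /andP[v2 t2]]] ef.
    have [-> _ _] := triad_f t1 v1 pv; have [-> _ _] := triad_f t2 v2 pv.
    by move: ef; rewrite /f => -[-> ->].
  have hn : (#|S :\: S0| <= VL p * #|DR p r| + #|DL p r| * VR r)%N.
    rewrite -(card_in_imset finj).
    apply: (@leq_trans #|setX (Vpart part p m) (DR p r) :|: setX (DL p r) (Vpart part m (y r))|).
      apply: subset_leq_card; apply/subsetP => x /imsetP[e eS ->].
      move: eS; rewrite in_setD => /andP[nS0 eS].
      move: eS; rewrite [e \in S]inE => /andP[eE /andP[ve te]].
      have [_ lI rI] := triad_f te ve pv.
      have /and5P[_ _ _ _ /andP[_ h3]] := te.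
      have /and5P[_ _ _ h1 _] := te.
      move: nS0; rewrite [e \in S0]inE ve te andbT [e \in E0]inE eE (hasT e p m (y r)) //= te /=.
      rewrite andbT negb_and => /orP[ok1F|ok2F].
      + move: ok1F; rewrite /ok1 negb_imply negb_forall_in => /andP[g1e /exists_inP[w we]].
        rewrite negb_imply => /andP[wV wU].
        have wr : w = odflt v [pick z in e :&: Vpart part m (y r)].
          by apply: (card1_eq h3) => //; rewrite inE we.
        rewrite in_setU; apply/orP; left; rewrite in_setX /f /=; apply/andP; split.
          by move: lI; rewrite inE => /andP[].
        rewrite -wr in_setD wU /= inE; apply/existsP; exists e.
        by rewrite eE te g1e we wV.
      + move: ok2F; rewrite /ok2 negb_imply negb_forall_in => /andP[g2e /exists_inP[w we]].
        rewrite negb_imply => /andP[wV wU].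
        have wl : w = odflt v [pick z in e :&: Vpart part p m].
          by apply: (card1_eq h1) => //; rewrite inE we.
        rewrite in_setU; apply/orP; right; rewrite in_setX /f /=; apply/andP; split.
          rewrite -wl in_setD wU /= inE; apply/existsP; exists e.
          by rewrite eE te g2e we wV.
        by move: rI; rewrite inE => /andP[].
    by rewrite cardsU !cardsX leq_subr.
  rewrite cardS natrD -mulrBl addrAC subrr add0r.
  case: (posnP (VL p * VR r)) => [d0|dp].
    by rewrite /VL /VR in d0; rewrite d0 invr0 mulr0 ltW.
  rewrite ler_pdivrMr ?ltr0n //.
  have := hn; rewrite -(ler_nat R) natrD !natrM => hn'.
  have VL0 : 0 <= (VL p)%:R :> R by [].
  have VR0 : 0 <= (VR r)%:R :> R by [].
  change (#|S :\: S0|%:R <= eps * ((VL p)%:R * (VR r)%:R)).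
  move: gR gL hn VL0 VR0 hn'; clear; move=> gR gL _ VL0 VR0 hn'.
  have ee : eps = 2 * c by rewrite /c; field.
  rewrite ee; nra.
- move=> w /existsP[e /andP[eE0 /and4P[te g1e we wV]]].
  move: eE0; rewrite inE => /andP[_ /andP[_ /implyP /(_ te) /andP[h _]]].
  move: h => /implyP /(_ g1e) /forall_inP /(_ w we) /implyP /(_ wV).
  rewrite inE => /existsP[j]; rewrite inE => /existsP[e' /andP[e'E /and4P[te' g1e' we' wV']]].
  have jp : (j < p)%N := ltn_ord j.
  exists j => //; rewrite nth_lo ?(ltnW jp) //.
  apply/existsP; exists e'; rewrite te' g1e' we' wV' !andbT.
  apply: (nonspec e' j m (y r)) => //.
  + by rewrite mem_s (ltnW jp).
  + by rewrite nth_lo //; apply/eqP => -[] jE; move: jp; rewrite jE ltnn.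
- move=> w /existsP[e /andP[eE0 /and4P[te g2e we wV]]].
  move: eE0; rewrite inE => /andP[_ /andP[_ /implyP /(_ te) /andP[_ h]]].
  move: h => /implyP /(_ g2e) /forall_inP /(_ w we) /implyP /(_ wV).
  rewrite inE => /existsP[j]; rewrite inE => /existsP[e' /andP[e'E /and4P[te' g2e' we' wV']]].
  have jr : (j < r)%N := ltn_ord j.
  exists (p.+2 + (r - j))%N.
    by rewrite sq_size; apply: ar4.
  rewrite nth_hi; last by apply: leq_subr.
  have -> : (y r + (r - j) = y j)%N by apply: ar1.
  apply/existsP; exists e'; rewrite te' g2e' we' wV' !andbT.
  apply: (nonspec e' p m (y j)) => //.
  + rewrite mem_s; apply/orP; right; apply/orP; right; rewrite /y leq_subr andbT.
    by rewrite leq_sub2l // ltnW.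
  + by rewrite nth_lo //; apply/eqP => -[] /eqP; rewrite /y ar2.
Qed.
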